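(* Let $K\ge 2$, $T\ge 1$, $\delta\in(0,1/K]$, $c>0$, $\eta_0>0$, $c_\eta>0$. For $t=1,\dots,T$ let $\mathbf z_t\in\Delta^{K-1}$ and $\widetilde f_t\in\mathbb R$ with $|\widetilde f_t|\le c$, and set $\mathbf g_t:=-\widetilde f_t\mathbf z_t$ and $\ell_t(\mathbf w):=\mathbf g_t^\top\mathbf w=-\widetilde f_t\,\mathbf w^\top\mathbf z_t$. Let $\widehat{\mathbf w}_1=(1/K,\dots,1/K)$ and, for $t=1,\dots,T$, $$\widehat{\mathbf w}_{t+1}:=\arg\min_{\mathbf w\in\Delta^{K-1}}\Big\{\eta_t\,\mathbf g_t^\top\mathbf w+\mathrm{KL}(\mathbf w\,\|\,\widehat{\mathbf w}_t)\Big\},\qquad \eta_t:=\frac{\eta_0}{\sqrt{1+c_\eta t}}.$$ Let $\mathbf w_1,\dots,\mathbf w_T\in\Delta^{K-1}$ be a comparator sequence. Assume that all $\mathbf w_t$ ($t=1,\dots,T$) and all iterates $\widehat{\mathbf w}_t$ ($t=1,\dots,T+1$) lie in $\Delta^{K-1}_\delta$. Define $V_T:=\sum_{t=2}^T\|\mathbf w_t-\mathbf w_{t-1}\|_1$, $L_\delta:=1+\log(1/\delta)$ and the dynamic regret $R_T^{\mathrm{dyn}}:=\sum_{t=1}^T\ell_t(\widehat{\mathbf w}_t)-\sum_{t=1}^T\ell_t(\mathbf w_t)$. Then $$R_T^{\mathrm{dyn}}\le\sqrt{1+c_\eta T}\left(\frac{\log(1/\delta)+L_\delta V_T}{\eta_0}+\frac{c^2\eta_0}{c_\eta}\right).$$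 In particular, if $\eta_0=\sqrt{c_\eta(\log(1/\delta)+L_\delta V_T)}/c$, then $R_T^{\mathrm{dyn}}\le 2c\sqrt{\frac{\log(1/\delta)+L_\delta V_T}{c_\eta}}\sqrt{1+c_\eta T}$.
   Context: $\Delta^{K-1}:=\{\mathbf x\in\mathbb R^K_{\ge0}:\sum_k x_k=1\}$ is the probability simplex; $\Delta^{K-1}_\delta:=\{\mathbf w\in\Delta^{K-1}:w_k\ge\delta\ \forall k\}$ is the truncated simplex. $\mathrm{KL}(\mathbf u\|\mathbf w):=\sum_{k=1}^K u_k\log(u_k/w_k)$ (with $0\log 0=0$), which is the Bregman divergence of the negative entropy $d(\mathbf w)=\sum_k w_k\log w_k$. *)

(* Defs.v *)
From HB Require Import structures.
From mathcomp Require Import all_boot all_order all_algebra.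
From mathcomp Require Import all_classical all_reals all_analysis.
Set Implicit Arguments. Unset Strict Implicit. Unset Printing Implicit Defensive.
Import Order.TTheory GRing.Theory Num.Theory.
Local Open Scope ring_scope.

Definition in_simplex (R : realType) (K : nat) (x : 'I_K -> R) : Prop :=
  (forall k, 0 <= x k) /\ \sum_(k < K) x k = 1.

Definition in_trunc_simplex (R : realType) (K : nat) (delta : R) (x : 'I_K -> R) : Prop :=
  in_simplex x /\ (forall k, delta <= x k).

Definition KL (R : realType) (K : nat) (u w : 'I_K -> R) : R :=
  \sum_(k < K) (if u k == 0 then 0 else u k * ln (u k / w k)).

Definition dotp (R : realType) (K : nat) (a b : 'I_K -> R) : R :=
  \sum_(k < K) a k * b k.

Definition l1dist (R : realType) (K : nat) (a b : 'I_K -> R) : R :=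
  \sum_(k < K) `|a k - b k|.

Definition is_argmin_simplex (R : realType) (K : nat) (F : ('I_K -> R) -> R)
  (x : 'I_K -> R) : Prop :=
  in_simplex x /\ (forall y, in_simplex y -> F x <= F y).

(* Main.v *)
Require Import Defs.
From mathcomp Require Import all_boot all_order all_algebra.
From mathcomp Require Import all_classical all_reals all_analysis.
From mathcomp Require Import ring lra zify.
Import Order.TTheory GRing.Theory Num.Theory.
Local Open Scope ring_scope.

Section Aux.
Set Implicit Arguments. Unset Strict Implicit.
Variable R : realType.
Implicit Types x y : R.

Lemma ln_le_sub1 y : 0 < y -> ln y <= y - 1.
Proof. move=> y0; have := @le_ln1Dx R (y - 1); rewrite addrCA subrr addr0; apply; lra. Qed.

Lemma ln_lt_sub1 y : 0 < y -> y != 1 -> ln y < y - 1.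
Proof.
move=> y0 y1; set s := Num.sqrt y.
have s0 : 0 < s by rewrite sqrtr_gt0.
have ss : s * s = y by rewrite -expr2 sqr_sqrtr // ltW.
have -> : ln y = ln s + ln s by rewrite -ss lnM // posrE.
have h := @ln_le_sub1 s s0.
have s1 : s != 1 by apply: contra y1 => /eqP s1; rewrite -ss s1 mulr1.
have : 0 < (s - 1) ^+ 2 by rewrite exprn_even_gt0 // subr_eq0.
rewrite -ss; nra.
Qed.

Lemma expR_ge3 x : 0 <= x -> 1 + x + x ^+ 2 / 2 + x ^+ 3 / 6 <= expR x.
Proof.
move=> x0; rewrite /expR.
have := nondecreasing_cvgn_le (nondecreasing_series (u_ := exp_coeff x) (P := predT) (m := 0%N) _) (is_cvg_series_exp_coeff x) 4.
have h : forall n, (0 <= n)%N -> predT n -> 0 <= exp_coeff x n by move=> n _ _; exact: exp_coeff_ge0.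
move=> /(_ h); apply: le_trans.
rewrite /series /= /exp_coeff /=.
rewrite !big_nat_recr //= big_nil.
have -> : (3`!)%:R = 6 :> R by [].
have -> : (2`!)%:R = 2 :> R by [].
rewrite expr0 expr1 !divr1 /=; lra.
Qed.

Lemma expRN_le x : 0 <= x -> expR (- x) <= 1 - x + x ^+ 2 / 2.
Proof.
move=> x0; have h := @expR_ge3 x x0; have e := expRxMexpNx_1 x.
have p0 := expR_gt0 (- x); have p1 := expR_gt0 x.
set P := 1 - x + x ^+ 2 / 2; set Q := 1 + x + x ^+ 2 / 2 + x ^+ 3 / 6.
have hP : 0 < P by rewrite /P; nra.
have x3 : 0 <= x ^+ 3 by rewrite exprn_ge0.
have x4 : 0 <= x ^+ 4 by rewrite exprn_ge0.
have x5 : 0 <= x ^+ 5 by rewrite exprn_ge0.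
have hPQ : 1 <= P * Q.
  have -> : P * Q = 1 + x ^+ 3 / 6 + x ^+ 4 / 12 + x ^+ 5 / 12 by rewrite /P /Q; field.
  lra.
have hPF : 1 <= P * expR x by apply: le_trans hPQ _; rewrite ler_wpM2l // ltW.
rewrite -(ler_pM2r p1) mulrC e; lra.

Qed.
End Aux.


Section Vec.
Set Implicit Arguments. Unset Strict Implicit.
Variable R : realType.
Variable K : nat.
Implicit Types u v w p x : 'I_K -> R.

Lemma lnDiv (a b : R) : 0 < a -> 0 < b -> ln (a / b) = ln a - ln b.
Proof. by move=> a0 b0; rewrite ln_div ?posrE. Qed.

Lemma ln_le0' (a : R) : a <= 1 -> ln a <= 0.
Proof. exact: ln_le0. Qed.

Lemma KL_pos u w : (forall k, 0 < u k) -> KL u w = \sum_(k < K) u k * ln (u k / w k).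
Proof. by move=> h; apply: eq_bigr => k _; rewrite gt_eqF. Qed.

Lemma simplex_le1 u : in_simplex u -> forall k, u k <= 1.
Proof.
move=> [u0 u1] k; rewrite -u1 (bigD1 k) //= lerDl; exact: sumr_ge0.
Qed.

Lemma KL_ge0 u p : in_simplex u -> in_simplex p -> (forall k, 0 < u k) ->
  (forall k, 0 < p k) -> 0 <= KL u p.
Proof.
move=> hu hp u0 p0; rewrite KL_pos //.
suff : \sum_(k < K) (u k - p k) <= \sum_(k < K) u k * ln (u k / p k).
  by rewrite sumrB hu.2 hp.2 subrr.
apply: ler_sum => k _.
have h := ln_le_sub1 (divr_gt0 (p0 k) (u0 k)).
have e : u k * (p k / u k) = p k by rewrite mulrC divfK // gt_eqF.
have uk := u0 k; rewrite !lnDiv // in h *; nra.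
Qed.

Lemma KL_le u p (d : R) : in_simplex u -> (forall k, 0 < u k) ->
  0 < d -> (forall k, d <= p k) -> KL u p <= ln (d^-1).
Proof.
move=> hu u0 d0 pd; rewrite KL_pos //.
suff : \sum_(k < K) u k * ln (u k / p k) <= \sum_(k < K) u k * ln d^-1.
  by rewrite -mulr_suml hu.2 mul1r.
apply: ler_sum => k _; apply: ler_wpM2l; first exact: ltW.
have p0 : 0 < p k by apply: lt_le_trans (pd k).
rewrite lnDiv // lnV ?posrE //.
have h1 := ln_le0 (simplex_le1 hu k).
have h2 : ln d <= ln (p k) by rewrite ler_ln ?posrE.
lra.
Qed.

Lemma KL_shift u v p (d : R) : 0 < d -> in_simplex u -> in_simplex v -> in_simplex p ->
  (forall k, d <= u k) -> (forall k, d <= v k) -> (forall k, d <= p k) ->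
  KL u p - KL v p <= (1 + ln (d^-1)) * l1dist u v.
Proof.
move=> d0 hu hv hp ud vd pd.
have u0 k : 0 < u k by apply: lt_le_trans (ud k).
have v0 k : 0 < v k by apply: lt_le_trans (vd k).
have p0 k : 0 < p k by apply: lt_le_trans (pd k).
rewrite !KL_pos // /l1dist mulr_sumr -sumrB; apply: ler_sum => k _.
set a := u k; set b := v k; set q := p k.
have a0 : 0 < a by exact: u0. have b0 : 0 < b by exact: v0. have q0 : 0 < q by exact: p0.
have h := ln_le_sub1 (divr_gt0 a0 b0).
have e : b * (a / b) = a by rewrite mulrC divfK // gt_eqF.
rewrite !lnDiv // in h *.
have hL : ln d^-1 = - ln d by rewrite lnV ?posrE.
have a1 : ln a <= 0 by apply: ln_le0; apply: simplex_le1.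
have q1 : ln q <= 0 by apply: ln_le0; apply: simplex_le1.
have da : ln d <= ln a by rewrite ler_ln ?posrE //; apply: ud.
have dq : ln d <= ln q by rewrite ler_ln ?posrE //; apply: pd.
have step1 : a * (ln a - ln q) - b * (ln b - ln q) <= (ln a - ln q + 1) * (a - b) by nra.
apply: le_trans step1 _.
apply: le_trans (ler_norm _) _; rewrite normrM ler_wpM2r //.
rewrite ler_norml hL; apply/andP; split; lra.
Qed.

Lemma md_step p x (gg : 'I_K -> R) e : (0 < K)%N -> in_simplex p -> in_simplex x ->
  (forall k, 0 < p k) -> (forall k, 0 < x k) ->
  (forall y, in_simplex y -> e * dotp gg x + KL x p <= e * dotp gg y + KL y p) ->
  forall k, ln (x k / p k) = - (e * gg k) - ln (\sum_(j < K) p j * expR (- (e * gg j))).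
Proof.
move=> K0 hp hx p0 x0 opt.
set E := fun j => expR (- (e * gg j)).
set Z := \sum_(j < K) p j * E j.
have E0 j : 0 < E j by exact: expR_gt0.
have Z0 : 0 < Z.
  rewrite /Z (bigD1 (Ordinal K0)) //=.
  have s0 : 0 <= \sum_(i < K | i != Ordinal K0) p i * E i.
    by apply: sumr_ge0 => i _; apply: mulr_ge0; apply: ltW.
  have := mulr_gt0 (p0 (Ordinal K0)) (E0 (Ordinal K0)); lra.
set q := fun j => p j * E j / Z.
have q0 j : 0 < q j by rewrite /q !mulr_gt0 // invr_gt0.
have hq : in_simplex q.
  split; first by move=> j; apply: ltW.
  by rewrite /q -mulr_suml divff // gt_eqF.
have lqp j : ln (q j) = ln (p j) - e * gg j - ln Z.
  rewrite /q lnDiv ?mulr_gt0 // lnM ?posrE // /E expRK; ring.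
have Fq : e * dotp gg q + KL q p = - ln Z.
  rewrite KL_pos // /dotp mulr_sumr -big_split /=.
  have e1 : \sum_(j < K) (e * (gg j * q j) + q j * ln (q j / p j)) = \sum_(j < K) (- ln Z) * q j.
    by apply: eq_bigr => j _; rewrite lnDiv // lqp; ring.
  by rewrite e1 -mulr_sumr hq.2 mulr1.
have Fx : e * dotp gg x + KL x p = \sum_(j < K) x j * ln (x j / q j) - ln Z.
  rewrite KL_pos // /dotp mulr_sumr -big_split /=.
  rewrite -[X in _ = _ - X]mulr1 -hx.2 mulr_sumr -sumrB; apply: eq_bigr => j _.
  by rewrite (lnDiv (x0 j) (q0 j)) (lnDiv (x0 j) (p0 j)) lqp; ring.
have hS : \sum_(j < K) x j * ln (x j / q j) <= 0.
  have := opt q hq; rewrite Fx Fq; lra.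
have hterm j : 0 <= x j * (q j / x j - 1 - ln (q j / x j)).
  apply: mulr_ge0; first exact: ltW.
  have := ln_le_sub1 (divr_gt0 (q0 j) (x0 j)); lra.
have hsum : \sum_(j < K) x j * (q j / x j - 1 - ln (q j / x j))
          = \sum_(j < K) x j * ln (x j / q j).
  have e1 : \sum_(j < K) x j * (q j / x j - 1 - ln (q j / x j))
      = \sum_(j < K) ((q j - x j) + x j * ln (x j / q j)).
    apply: eq_bigr => j _ /=.
    have xn : x j != 0 by rewrite gt_eqF.
    rewrite (lnDiv (q0 j) (x0 j)) (lnDiv (x0 j) (q0 j)); field; exact: xn.
  by rewrite e1 big_split /= sumrB hq.2 hx.2 subrr add0r.
have hz : \sum_(j < K) x j * (q j / x j - 1 - ln (q j / x j)) = 0.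
  apply: le_anti; rewrite hsum hS /=; rewrite -hsum; exact: sumr_ge0.
have all0 := psumr_eq0P (fun j _ => hterm j) hz.
move=> k.
have : q k / x k - 1 - ln (q k / x k) = 0.
  have := all0 k isT; move/eqP; rewrite mulf_eq0 gt_eqF //= => /eqP //.
move=> h0.
case: (eqVneq (q k / x k) 1) => [h1|hn]; last first.
  have := ln_lt_sub1 (divr_gt0 (q0 k) (x0 k)) hn; lra.
have qx : q k = x k by rewrite -[q k](@divfK _ (x k)) ?gt_eqF // h1 mul1r.
have hk := lqp k; rewrite qx in hk; rewrite lnDiv //; lra.
Qed.

Lemma lse_bound p (g h : 'I_K -> R) m e c : (0 < K)%N -> in_simplex p ->
  (forall k, 0 < p k) -> 0 <= e ->
  (forall k, g k = h k - m) -> (forall k, 0 <= h k <= c) ->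
  ln (\sum_(j < K) p j * expR (- (e * g j))) + e * dotp g p <= e ^+ 2 * c ^+ 2 / 2.
Proof.
move=> K0 hp p0 e0 hg hh.
set Zh := \sum_(j < K) p j * expR (- (e * h j)).
have eZ : \sum_(j < K) p j * expR (- (e * g j)) = Zh * expR (e * m).
  rewrite /Zh mulr_suml; apply: eq_bigr => j _; rewrite hg -mulrA -expRD.
  congr (_ * expR _); ring.
have Zh0 : 0 < Zh.
  rewrite /Zh (bigD1 (Ordinal K0)) //=.
  have s0 : 0 <= \sum_(i < K | i != Ordinal K0) p i * expR (- (e * h i)).
    by apply: sumr_ge0 => i _; apply: mulr_ge0; [apply: ltW | apply: expR_ge0].
  have := mulr_gt0 (p0 (Ordinal K0)) (expR_gt0 (- (e * h (Ordinal K0)))); lra.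
rewrite eZ lnM ?posrE ?expR_gt0 // expRK.
have ed : dotp g p = dotp h p - m.
  rewrite /dotp.
  have e2 : \sum_(j < K) g j * p j = \sum_(j < K) (h j * p j - m * p j).
    by apply: eq_bigr => j _; rewrite hg; ring.
  by rewrite e2 sumrB -mulr_sumr hp.2 mulr1.
have hZ : Zh <= \sum_(j < K) (p j - e * (h j * p j) + e ^+ 2 * c ^+ 2 / 2 * p j).
  apply: ler_sum => j _.
  have pj := p0 j; have [h0 hc] := andP (hh j).
  have ex := expRN_le (mulr_ge0 e0 h0).
  have eh : (e * h j) ^+ 2 <= e ^+ 2 * c ^+ 2.
    have ehc : e * h j <= e * c by apply: ler_wpM2l.
    have eh0 : 0 <= e * h j by apply: mulr_ge0.
    rewrite -exprMn !expr2; nra.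
  nra.
rewrite !big_split /= sumrN -!mulr_sumr hp.2 mulr1 in hZ.
have := ln_le_sub1 Zh0; rewrite ed /dotp; lra.
Qed.

Lemma step_bound p x u (z : 'I_K -> R) (f e c : R) : (0 < K)%N ->
  in_simplex p -> in_simplex x -> in_simplex u -> in_simplex z ->
  (forall k, 0 < p k) -> (forall k, 0 < x k) -> (forall k, 0 < u k) -> 0 < e -> `|f| <= c ->
  (forall y, in_simplex y -> e * dotp (fun k => - f * z k) x + KL x p
                            <= e * dotp (fun k => - f * z k) y + KL y p) ->
  dotp (fun k => - f * z k) p - dotp (fun k => - f * z k) u
    <= (KL u p - KL u x) / e + e * c ^+ 2 / 2.
Proof.
move=> K0 hp hx hu hz p0 x0 u0 e0 hf opt.
set gg := fun k => - f * z k.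
have hl := md_step K0 hp hx p0 x0 opt.
set Z := \sum_(j < K) p j * expR (- (e * gg j)).
have hKL : KL u p - KL u x = - (e * dotp gg u) - ln Z.
  rewrite !KL_pos // -sumrB.
  have e1 : \sum_(k < K) (u k * ln (u k / p k) - u k * ln (u k / x k))
          = \sum_(k < K) (- (e * (gg k * u k)) - ln Z * u k).
    apply: eq_bigr => k _.
    have hk := hl k; rewrite (lnDiv (x0 k) (p0 k)) in hk.
    rewrite (lnDiv (u0 k) (p0 k)) (lnDiv (u0 k) (x0 k)).
    have -> : ln (p k) = ln (x k) + e * gg k + ln Z by move: hk; rewrite -/Z /gg; lra.
    ring.
  by rewrite e1 sumrB sumrN -!mulr_sumr hu.2 mulr1 /dotp.
have hD : ln Z + e * dotp gg p <= e ^+ 2 * c ^+ 2 / 2.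
  have zb k : 0 <= z k <= 1 by rewrite hz.1 simplex_le1.
  case: (leP 0 f) => f0.
    apply: (@lse_bound p gg (fun k => f * (1 - z k)) f e c K0 hp p0 (ltW e0)).
      by move=> k; rewrite /gg; ring.
    move=> k; have [z0 z1] := andP (zb k); rewrite ger0_norm // in hf.
    apply/andP; split; nra.
  apply: (@lse_bound p gg (fun k => - f * z k) 0 e c K0 hp p0 (ltW e0)).
    by move=> k; rewrite /gg subr0.
  move=> k; have [z0 z1] := andP (zb k); rewrite ltr0_norm // in hf.
  apply/andP; split; nra.
rewrite hKL -(ler_pM2l e0).
have -> : e * ((- (e * dotp gg u) - ln Z) / e + e * c ^+ 2 / 2)
        = - (e * dotp gg u) - ln Z + e ^+ 2 * c ^+ 2 / 2.
  by field; rewrite gt_eqF.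
lra.
Qed.
End Vec.


Section Seq.
Set Implicit Arguments. Unset Strict Implicit.
Variable R : realType.

Lemma sum_inv_sqrt (a : R) : 0 < a -> forall n : nat,
  \sum_(1 <= t < n.+1) (Num.sqrt (1 + a * t%:R))^-1 <= 2 * Num.sqrt (1 + a * n%:R) / a.
Proof.
move=> a0; elim=> [|n IH].
  rewrite big_geq // mulr0 addr0 sqrtr1 mulr1; apply: divr_ge0 => //; exact: ltW.
rewrite big_nat_recr //=.
set X := Num.sqrt (1 + a * n.+1%:R); set Y := Num.sqrt (1 + a * n%:R).
have n0 : 0 <= n%:R :> R by [].
have hY2 : Y ^+ 2 = 1 + a * n%:R by rewrite sqr_sqrtr //; nra.
have hX2 : X ^+ 2 = 1 + a * n%:R + a by rewrite /X mulrSr sqr_sqrtr; [ring | nra].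
have Y0 : 0 <= Y by exact: sqrtr_ge0.
have X0 : 0 < X by rewrite sqrtr_gt0 mulrSr; nra.
rewrite -/Y in IH.
suff h : X^-1 <= 2 * X / a - 2 * Y / a by lra.
have -> : 2 * X / a - 2 * Y / a = (2 * X - 2 * Y) / a by field; rewrite gt_eqF.
rewrite ler_pdivlMr //.
set ix := X^-1.
have ixX : ix * X = 1 by rewrite /ix mulVf // gt_eqF.
have ix0 : 0 <= ix by rewrite /ix invr_ge0 ltW.
have hh := mulr_ge0 ix0 (sqr_ge0 (X - Y)).
have e1 : ix * X * X = X by rewrite ixX mul1r.
have e2 : ix * X * Y = Y by rewrite ixX mul1r.
have ea : a = X ^+ 2 - Y ^+ 2 by rewrite hX2 hY2; ring.
rewrite ea; rewrite !expr2 in hh *; nra.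
Qed.

Lemma tele (a A B d : nat -> R) (L Ld : R) (N : nat) :
  (forall t, 0 <= a t) -> (forall s t, (s <= t)%N -> a s <= a t) ->
  (forall t, (1 <= t <= N)%N -> 0 <= B t <= L) ->
  A 1%N <= L ->
  (forall t, (2 <= t <= N)%N -> A t <= B t.-1 + Ld * d t) ->
  forall m, (m.+1 <= N)%N ->
  \sum_(1 <= t < m.+2) a t * (A t - B t) <=
    a m.+1 * (L - B m.+1) + Ld * \sum_(2 <= t < m.+2) a t * d t.
Proof.
move=> a0 amono hB hA1 hA; elim=> [|m IH] hm.
  rewrite big_nat1 big_geq // mulr0 addr0.
  by apply: ler_wpM2l => //; lra.
rewrite big_nat_recr //= [X in _ <= _ + Ld * X]big_nat_recr //=.
have := IH (ltnW hm).
have := hA m.+2; rewrite hm /= => /(_ isT) hAm.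
have [b0 bL] := andP (hB m.+1 (ltnW hm)).
have [b0' bL'] := andP (hB m.+2 hm).
have am := amono m.+1 m.+2 (leqnSn _).
have a2 := a0 m.+2.
move=> ih.
have : a m.+2 * (A m.+2 - B m.+2) <= a m.+2 * (B m.+1 + Ld * d m.+2 - B m.+2).
  by apply: ler_wpM2l => //; lra.
nra.
Qed.

Lemma final_alg (X c e0 ce S : R) : 0 < c -> 0 < ce -> 0 < e0 ->
  e0 = Num.sqrt (ce * X) / c ->
  S * (X / e0 + c ^+ 2 * e0 / ce) = 2 * c * Num.sqrt (X / ce) * S.
Proof.
move=> c0 ce0 e00 he.
have X0 : 0 < X.
  case: (ltP 0 X) => // Xle.
  have : Num.sqrt (ce * X) = 0 by apply: ler0_sqrtr; nra.
  move=> h; rewrite h mul0r in he; lra.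
set r := Num.sqrt (X / ce).
have r0 : 0 < r by rewrite sqrtr_gt0 divr_gt0.
have r2 : r ^+ 2 = X / ce by rewrite sqr_sqrtr // ltW // divr_gt0.
have hX : X = ce * r ^+ 2 by rewrite r2; field; rewrite gt_eqF.
have hs : Num.sqrt (ce * X) = ce * r.
  by rewrite hX mulrA -expr2 -exprMn sqrtr_sqr ger0_norm // mulr_ge0 // ltW.
rewrite he hs hX; field.
by rewrite !gt_eqF.
Qed.
End Seq.


Theorem theorem1 (R : realType) (K T : nat) (delta c eta0 c_eta : R)
  (z : nat -> 'I_K -> R) (ft : nat -> R)
  (what w : nat -> 'I_K -> R) :
  (2 <= K)%N -> (1 <= T)%N ->
  0 < delta -> delta <= K%:R^-1 -> 0 < c -> 0 < eta0 -> 0 < c_eta ->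
  (forall t, (1 <= t <= T)%N -> in_simplex (z t)) ->
  (forall t, (1 <= t <= T)%N -> `|ft t| <= c) ->
  let g := fun t k => - ft t * z t k in
  let eta := fun t : nat => eta0 / Num.sqrt (1 + c_eta * t%:R) in
  (forall k, what 1%N k = K%:R^-1) ->
  (forall t, (1 <= t <= T)%N ->
     is_argmin_simplex (fun x => eta t * dotp (g t) x + KL x (what t)) (what t.+1)) ->
  (forall t, (1 <= t <= T)%N -> in_trunc_simplex delta (w t)) ->
  (forall t, (1 <= t <= T.+1)%N -> in_trunc_simplex delta (what t)) ->
  let V := \sum_(2 <= t < T.+1) l1dist (w t) (w t.-1) in
  let Ld := 1 + ln (delta^-1) in
  let Rdyn := \sum_(1 <= t < T.+1) dotp (g t) (what t)
              - \sum_(1 <= t < T.+1) dotp (g t) (w t) in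
  Rdyn <= Num.sqrt (1 + c_eta * T%:R) *
            ((ln (delta^-1) + Ld * V) / eta0 + c ^+ 2 * eta0 / c_eta)
  /\ (eta0 = Num.sqrt (c_eta * (ln (delta^-1) + Ld * V)) / c ->
      Rdyn <= 2 * c * Num.sqrt ((ln (delta^-1) + Ld * V) / c_eta)
                * Num.sqrt (1 + c_eta * T%:R)).
Proof.
move=> hK; case: T => [//|T] hT d0 dK c0 e00 ce0 hz hf g eta hw1 hopt hw hwhat V Ld Rdyn.
have K0 : (0 < K)%N by apply: leq_trans hK.
have Kr : 0 < K%:R :> R by rewrite ltr0n.
have d1 : delta <= 1.
  apply: le_trans dK _; rewrite invf_le1 // ler1n //.
set L := ln (delta^-1).
have L0 : 0 <= L by apply: ln_ge0; rewrite invf_ge1.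
have Ld0 : 0 <= Ld by rewrite /Ld -/L; lra.
have whp t : (1 <= t <= T.+2)%N -> forall k, 0 < what t k.
  by move=> ht k; apply: lt_le_trans d0 ((hwhat t ht).2 k).
have wp t : (1 <= t <= T.+1)%N -> forall k, 0 < w t k.
  by move=> ht k; apply: lt_le_trans d0 ((hw t ht).2 k).
set a := fun t : nat => Num.sqrt (1 + c_eta * t%:R) / eta0.
have s0 (t : nat) : 0 < Num.sqrt (1 + c_eta * t%:R).
  rewrite sqrtr_gt0; have : 0 <= t%:R :> R by []; nra.
have a0 t : 0 <= a t by rewrite /a divr_ge0 // ?ltW.
have amono s t : (s <= t)%N -> a s <= a t.
  move=> st; rewrite /a; apply: ler_wpM2r; first by rewrite invr_ge0 ltW.
  rewrite ler_sqrt; last first.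
    have : 0 <= t%:R :> R by []; nra.
  have : s%:R <= t%:R :> R by rewrite ler_nat.
  nra.
have hstep t : (1 <= t < T.+2)%N ->
    dotp (g t) (what t) - dotp (g t) (w t)
      <= a t * (KL (w t) (what t) - KL (w t) (what t.+1)) + eta t * c ^+ 2 / 2.
  move=> ht.
  have ht1 : (1 <= t <= T.+1)%N by exact: ht.
  have ht2 : (1 <= t.+1 <= T.+2)%N by lia.
  have ht3 : (1 <= t <= T.+2)%N by lia.
  have e0 : 0 < eta t by rewrite /eta divr_gt0.
  have := step_bound K0 (hwhat t ht3).1 (hwhat t.+1 ht2).1 (hw t ht1).1 (hz t ht1)
    (whp t ht3) (whp t.+1 ht2) (wp t ht1) e0 (hf t ht1) (hopt t ht1).2.
  have -> : (KL (w t) (what t) - KL (w t) (what t.+1)) / eta t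
          = a t * (KL (w t) (what t) - KL (w t) (what t.+1)).
    by rewrite /eta /a; field; rewrite !gt_eqF.
  by [].
have hsum : Rdyn <= \sum_(1 <= t < T.+2) a t * (KL (w t) (what t) - KL (w t) (what t.+1))
                 + \sum_(1 <= t < T.+2) eta t * c ^+ 2 / 2.
  rewrite /Rdyn -sumrB -big_split /=; apply: ler_sum_nat => t ht; exact: hstep.
have hB t : (1 <= t <= T.+1)%N ->
    0 <= KL (w t) (what t.+1) <= L.
  move=> ht; have ht2 : (1 <= t.+1 <= T.+2)%N by lia.
  apply/andP; split.
    exact: KL_ge0 (hw t ht).1 (hwhat t.+1 ht2).1 (wp t ht) (whp t.+1 ht2).
  exact: KL_le (hw t ht).1 (wp t ht) d0 (hwhat t.+1 ht2).2.
have hA1 : KL (w 1%N) (what 1%N) <= L.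
  exact: KL_le (hw 1%N isT).1 (wp 1%N isT) d0 (hwhat 1%N isT).2.
have hA t : (2 <= t <= T.+1)%N ->
    KL (w t) (what t) <= KL (w t.-1) (what t.-1.+1) + Ld * l1dist (w t) (w t.-1).
  move=> ht.
  have t1 : t.-1.+1 = t by lia.
  have ha : (1 <= t <= T.+1)%N by lia.
  have hb : (1 <= t.-1 <= T.+1)%N by lia.
  have hc : (1 <= t <= T.+2)%N by lia.
  rewrite t1.
  have := KL_shift d0 (hw t ha).1 (hw t.-1 hb).1 (hwhat t hc).1 (hw t ha).2 (hw t.-1 hb).2 (hwhat t hc).2.
  rewrite -/L /Ld -/L; lra.
have htele := @tele R a (fun t => KL (w t) (what t)) (fun t => KL (w t) (what t.+1))
  (fun t => l1dist (w t) (w t.-1)) L Ld T.+1 a0 amono hB hA1 hA T (leqnn _).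
have hV : \sum_(2 <= t < T.+2) a t * l1dist (w t) (w t.-1) <= a T.+1 * V.
  rewrite /V mulr_sumr; apply: ler_sum_nat => t ht; apply: ler_wpM2r.
    by apply: sumr_ge0 => k _; apply: normr_ge0.
  by apply: amono; lia.
have hS := sum_inv_sqrt ce0 T.+1.
have heta : \sum_(1 <= t < T.+2) eta t * c ^+ 2 / 2
    = c ^+ 2 / 2 * eta0 * \sum_(1 <= t < T.+2) (Num.sqrt (1 + c_eta * t%:R))^-1.
  rewrite mulr_sumr; apply: eq_bigr => t _; rewrite /eta; ring.
have hBT := hB T.+1 (leqnn _).
set S := Num.sqrt (1 + c_eta * T.+1%:R).
have P1 : Rdyn <= S * ((L + Ld * V) / eta0 + c ^+ 2 * eta0 / c_eta).
  apply: le_trans hsum _.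
  rewrite heta.
  have h1 : c ^+ 2 / 2 * eta0 * \sum_(1 <= t < T.+2) (Num.sqrt (1 + c_eta * t%:R))^-1
            <= c ^+ 2 / 2 * eta0 * (2 * S / c_eta).
    apply: ler_wpM2l hS; have : 0 <= c ^+ 2 by apply: sqr_ge0. nra.
  have h2 : a T.+1 * (L - KL (w T.+1) (what T.+2)) <= a T.+1 * L.
    apply: ler_wpM2l => //; move/andP: hBT => [hb1 hb2]; lra.
  have h3 : Ld * \sum_(2 <= t < T.+2) a t * l1dist (w t) (w t.-1) <= Ld * (a T.+1 * V).
    exact: ler_wpM2l.
  have -> : S * ((L + Ld * V) / eta0 + c ^+ 2 * eta0 / c_eta)
      = a T.+1 * L + Ld * (a T.+1 * V) + c ^+ 2 / 2 * eta0 * (2 * S / c_eta).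
    have S0 : 0 < S := s0 T.+1.
    rewrite /a -/S; field; rewrite !gt_eqF //.
  lra.
split; first exact: P1.
move=> he.
by rewrite -(final_alg S c0 ce0 e00 he).
Qed.
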